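(* Let $q$ be a prime power. Then the subgroup of $\overline{\mathbb{Q}}^*$ generated by all $q$-Weil numbers of weight one has infinite rank.
   Context: A $q$-Weil number of weight one is an algebraic integer $\alpha\in\overline{\mathbb{Q}}$ such that $|\iota(\alpha)|=q^{1/2}$ for every embedding $\iota:\overline{\mathbb{Q}}\hookrightarrow\mathbb{C}$. *)

(* Defs.v *)
From HB Require Import structures.
From mathcomp Require Import all_boot all_order all_algebra all_field.
Set Implicit Arguments. Unset Strict Implicit. Unset Printing Implicit Defensive.
Import Order.TTheory GRing.Theory Num.Theory.
Local Open Scope ring_scope.

(* algC plays the role of \overline{Q}; its field embeddings into C
   correspond to ring morphisms algC -> algC. *)

Definition prime_power (q : nat) : Prop :=
  exists p e : nat, prime p /\ (0 < e)%N /\ q = (p ^ e)%N.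

Definition weil_number (q : nat) (a : algC) : Prop :=
  a \in Aint /\ forall u : {rmorphism algC -> algC}, `|u a| = sqrtC q%:R.

Definition in_weil_group (q : nat) (x : algC) : Prop :=
  exists (n : nat) (w : 'I_n -> algC) (k : 'I_n -> int),
    (forall i, weil_number q (w i)) /\ x = \prod_(i < n) (w i) ^ (k i).

Definition infinite_rank (G : algC -> Prop) : Prop :=
  forall n : nat, exists x : 'I_n -> algC,
    (forall i, G (x i)) /\
    forall k : 'I_n -> int, \prod_(i < n) (x i) ^ (k i) = 1 -> forall i, k i = 0.

(* Main.v *)
Require Import Defs.
From HB Require Import structures.
From mathcomp Require Import all_boot all_order all_algebra all_field.
From mathcomp Require Import ring zify.
Set Implicit Arguments. Unset Strict Implicit. Unset Printing Implicit Defensive.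
Import Order.TTheory GRing.Theory Num.Theory.
Local Open Scope ring_scope.
Lemma unit_norm (eta : algC) (N : nat) : (0 < N)%N -> eta ^+ N = 1 -> `|eta| = 1.
Proof.
move=> N0 H; have := congr1 (fun x => `|x|) H; rewrite /= normrX normr1 => H1.
apply: (pexpIrn N0); rewrite ?nnegrE ?normr_ge0 ?ler01 // H1 expr1n.
by [].

Qed.

Lemma beta_bound (eta : algC) : `|eta| = 1 -> `|eta + eta^-1| <= 2.
Proof.
move=> H; apply: le_trans (ler_normD _ _) _.
by rewrite normfV H invr1.
Qed.

Lemma weil_quad (z eta : algC) (Q : nat) : (1 < Q)%N -> `|eta| = 1 ->
  z ^+ 2 - (eta + eta^-1) * z + Q%:R = 0 -> `|z| ^+ 2 = Q%:R.
Proof.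
move=> Q1 He Hz; set b := eta + eta^-1 in Hz.
have e0 : eta != 0 by rewrite -normr_eq0 He oner_eq0.
have ec : eta^* = eta^-1.
  have : eta * eta^* = 1 by rewrite -normCK He expr1n.
  by move=> H; rewrite -[eta^*](mulKf e0) H mulr1.
have bc : b^* = b.
  rewrite /b rmorphD fmorphV -[_ eta]/(eta^*) ec invrK addrC //.
have Hc : z^* ^+ 2 - b * z^* + Q%:R = 0.
  by have := congr1 Num.conj Hz; rewrite rmorphD rmorphB rmorphXn rmorphM rmorph_nat rmorph0 -[_ b]/(b^*) bc.
have E : (z^* - z) * (z^* + z - b) = (z^* ^+ 2 - b * z^* + Q%:R) - (z ^+ 2 - b * z + Q%:R) by ring.
rewrite Hz Hc subrr in E.
move/eqP: E; rewrite mulf_eq0 => /orP[|].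
  rewrite subr_eq0 => /eqP zr.
  have zR : z \is Num.real by rewrite CrealE zr.
  have bR : b \is Num.real by rewrite CrealE bc.
  have E2 : (2 * z - b) ^+ 2 = b ^+ 2 - 4 * Q%:R.
    have -> : (2 * z - b) ^+ 2 = 4 * (z ^+ 2 - b * z + Q%:R) + b ^+ 2 - 4 * Q%:R by ring.
    by rewrite Hz mulr0 add0r.
  have R2 : (2 * z - b) \is Num.real by rewrite rpredB ?rpredM ?rpred_nat.
  have h1 : 0 <= `|2 * z - b| ^+ 2 by rewrite exprn_ge0.
  rewrite real_normK // E2 -real_normK // in h1.
  have h2 : `|b| ^+ 2 <= 4.
    have := beta_bound He; rewrite -/b => hb.
    have -> : (4 : algC) = 2 ^+ 2 by rewrite expr2; rewrite -natrM.
    by rewrite lerXn2r // ?nnegrE ?ler0n.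
  have : 0 <= 4 - 4 * (Q%:R : algC) by apply: le_trans h1 _; rewrite lerD2r.
  rewrite subr_ge0 -natrM ler_nat; lia.
rewrite subr_eq0 => /eqP zc.
have zc2 : z^* = b - z by rewrite -zc addrK.
rewrite normCK zc2.
have -> : z * (b - z) = - (z ^+ 2 - b * z + Q%:R) + Q%:R by ring.
by rewrite Hz oppr0 add0r.
Qed.
Lemma far_root (rho : algC) (m : nat) : (0 < m)%N -> rho ^+ m = 1 -> rho ^+ 2 != 1 ->
  exists v : {rmorphism algC -> algC}, 1 <= `|v rho ^+ 2 - 1|.
Proof.
move=> m0 Hm H2; set s := rho ^+ 2 in H2 *.
have sm : s ^+ m = 1 by rewrite /s -exprM mulnC exprM Hm expr1n.
have [k prk _] := prim_order_exists m0 sm.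
have k1 : (1 < k)%N.
  have k0 := prim_order_gt0 prk; case: k prk k0 => [|[|k]] // prk _.
  by have := prim_expr_order prk; rewrite expr1 => E; rewrite E eqxx in H2.
have Hc := Cintr_Cyclotomic prk.
have Hv : (map_poly intr 'Phi_k).[1] = \prod_(j < k | coprime j k) (1 - s ^+ j) :> algC.
  by rewrite Hc /cyclotomic horner_prod; apply: eq_bigr => j _; rewrite hornerXsubC.
have Hv2 : (map_poly intr 'Phi_k).[1] = (('Phi_k).[1])%:~R :> algC.
  by rewrite -[X in _.[X]](rmorph1 (intr : int -> algC)) horner_map.
have nz : (('Phi_k).[1]) != 0.
  apply/negP => /eqP E.
  have : root (cyclotomic s k) 1 by rewrite /root -Hc Hv2 E.
  rewrite (root_cyclotomic prk) => pr1.
  by have := prim_order_dvd pr1 1; rewrite expr1 eqxx ; rewrite dvdn1 => /eqP k1'; rewrite k1' in k1.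
have ge1 : 1 <= \prod_(j < k | coprime j k) `|1 - s ^+ j|.
  rewrite -normr_prod -Hv Hv2; apply: norm_intr_ge1; rewrite ?intr_int ?intr_eq0 //.
case: (pickP (fun j : 'I_k => coprime j k && (1 <= `|1 - s ^+ j|))) => [j /andP[cj hj] | none].
  have [v Hv'] := Qn_aut_exists cj.
  exists v.
  have -> : v rho ^+ 2 = s ^+ j.
    by rewrite -rmorphXn -/s Hv' // (prim_expr_order prk).
  by rewrite distrC.
exfalso.
have lt1 : forall j : 'I_k, coprime j k -> `|1 - s ^+ j| < 1.
  move=> j cj; have := none j; rewrite cj /= => /negbT.
  by rewrite -real_ltNge ?realE ?normr_ge0 ?ler01.
pose j1 : 'I_k := Ordinal k1.
have cj1 : coprime j1 k by rewrite /coprime gcd1n.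
rewrite (bigD1 j1) //= in ge1.
have : `|1 - s ^+ j1| * \prod_(j < k | coprime j k && (j != j1)) `|1 - s ^+ j| < 1.
  apply: (le_lt_trans _ (lt1 _ cj1)).
  rewrite -[X in _ <= X]mulr1; apply: ler_wpM2l; first exact: normr_ge0.
  apply: prodr_ile1 => j /andP[cj _]; rewrite normr_ge0 /=; exact: ltW (lt1 _ cj).
by move=> H; have := lt_le_trans H ge1; rewrite ltxx.
Qed.
Lemma aux_id (F : fieldType) (a b s : F) : a != 0 -> b != 0 ->
  a * a + 1 - s * (a * b + a / b) = a * ((a + a^-1) - s * (b + b^-1)).
Proof. by move=> a0 b0; field; rewrite a0 b0. Qed.

Lemma beta_distinct (z : algC) (N c c' : nat) (sg : bool) :
  N.-primitive_root z -> (0 < c')%N -> (c' < c)%N -> (2 * c < totient N)%N ->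
  z ^+ c + z ^- c != (-1) ^+ sg * (z ^+ c' + z ^- c').
Proof.
move=> prz c'0 cc' ctot; apply/negP => /eqP E.
have z0 : z != 0.
  by apply/negP => /eqP z0; have := prim_expr_order prz; rewrite z0 expr0n eqn0Ngt (prim_order_gt0 prz) /= => /eqP; rewrite eq_sym oner_eq0.
pose P : {poly rat} := 'X^(2 * c) + 1 - (-1) ^+ sg *: ('X^(c + c') + 'X^(c - c')).
have rootP : root (map_poly ratr P) z.
  rewrite /root /P rmorphB rmorphD /= map_polyZ rmorphD /= !map_polyXn rmorph1 rmorphXn rmorphN1.
  rewrite !hornerE.
  rewrite mul2n -addnn !exprD (exprB (ltnW cc')) ?unitfE ?expf_neq0 //.
  have zc0 : z ^+ c != 0 by rewrite expf_neq0.
  have zc'0 : z ^+ c' != 0 by rewrite expf_neq0.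
  rewrite aux_id //.
  by rewrite E subrr mulr0.
have [p [Dp _] dvp] := minCpolyP z.
have pP : (p %| P)%R by rewrite -dvp.
have P0 : P != 0.
  apply/negP => /eqP P0; have := congr1 (fun q : {poly rat} => q`_(2 * c)) P0.
  rewrite /= coef0 /P coefB coefD coefZ coefD !coefXn coef1.
  rewrite eqxx.
  have -> : (2 * c == c + c')%N = false by apply/negbTE; lia.
  have -> : (2 * c == c - c')%N = false by apply/negbTE; lia.
  have -> : (2 * c == 0)%N = false by apply/negbTE; lia.
  by rewrite addr0 addr0 mulr0 subr0 => /eqP; rewrite oner_eq0.
have := dvdp_leq P0 pP.
have -> : size p = (totient N).+1.
  by rewrite -(size_map_poly (ratr : rat -> algC)) -Dp (minCpoly_cyclotomic prz) size_cyclotomic.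
have : (size P <= (2 * c).+1)%N.
  rewrite /P; apply: (leq_trans (size_polyD _ _)); rewrite geq_max; apply/andP; split.
    apply: (leq_trans (size_polyD _ _)); rewrite geq_max size_polyXn size_poly1 leqnn /=; lia.
  rewrite size_polyN; apply: (leq_trans (size_scale_leq _ _)).
  apply: (leq_trans (size_polyD _ _)); rewrite geq_max !size_polyXn; apply/andP; split; lia.
move=> h1 h2; have := leq_trans h2 h1; by rewrite ltnS leqNgt ctot.
Qed.
Lemma size_XQexp (e Q i : nat) : (0 < e)%N ->
  size (('X^(2 * e) + (Q%:R : algC)%:P) ^+ i) = (2 * e * i).+1.
Proof.
move=> e0; have m : 'X^(2 * e) + (Q%:R : algC)%:P \is monic by apply: monicXnaddC; lia.
have := size_exp ('X^(2 * e) + (Q%:R : algC)%:P) i.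
rewrite size_XnaddC; last lia.
have : size (('X^(2 * e) + (Q%:R : algC)%:P) ^+ i) != 0%N.
  by rewrite size_poly_eq0 monic_neq0 ?monic_exp.
case: (size _) => // n _ /= ->. by [].
Qed.

Lemma Aint_root2 (beta y : algC) (e Q : nat) : beta \in Aint -> (0 < e)%N ->
  (y ^+ e) ^+ 2 - beta * y ^+ e + Q%:R = 0 -> y \in Aint.
Proof.
move=> Ab e0 Hy.
have CZ : minCpoly beta \is a polyOver Num.int by [].
have Cm := minCpoly_monic beta.
have Cs := size_minCpoly beta.
set C := minCpoly beta in CZ Cm Cs.
set d := (size C).-1.
have sC : size C = d.+1 by rewrite /d; case: (size C) Cs.
pose F (i : 'I_d.+1) := C`_i *: (('X^(2 * e) + (Q%:R : algC)%:P) ^+ i * 'X^(e * (d - i))).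
pose S := \sum_(i < d.+1) F i.
apply: (@root_monic_Aint S).
- rewrite /root /S horner_sum.
  have Hb : y ^+ (2 * e) + Q%:R = beta * y ^+ e.
    by rewrite mulnC exprM -[LHS]subr0 -Hy; ring.
  have -> : \sum_(i < d.+1) (F i).[y] = \sum_(i < d.+1) (C`_i * beta ^+ i) * (y ^+ e) ^+ d.
    apply: eq_bigr => i _; rewrite /F hornerZ hornerM horner_exp hornerD hornerXn hornerC Hb.
    rewrite exprMn -mulrA hornerXn exprM -mulrA -exprD subnKC ?mulrA //; last by rewrite -ltnS.
  by rewrite -mulr_suml -sC -horner_coef (eqP (root_minCpoly beta)) mul0r.
- rewrite /S big_ord_recr /=.
  have -> : F ord_max = ('X^(2 * e) + (Q%:R : algC)%:P) ^+ d.
    rewrite /F /= subnn muln0 expr0 mulr1.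
    have -> : C`_d = 1 by have := monicP Cm; rewrite lead_coefE sC.
    by rewrite scale1r.
  apply/monicP; rewrite lead_coefDr.
    by apply/monicP; apply: monic_exp; apply: monicXnaddC; lia.
  rewrite size_XQexp //.
  apply: (leq_ltn_trans (size_sum _ _ _)).
  rewrite ltnS; apply/bigmax_leqP => i _.
  rewrite /F; apply: (leq_trans (size_scale_leq _ _)).
  apply: (leq_trans (size_polyMleq _ _)).
  rewrite size_XQexp // size_polyXn /=.
  have := ltn_ord i; move: (nat_of_ord i) => k hk.
  have : (k < d)%N by [].
  nia.
- suff : S \is a polyOver Num.int_num_subdef by [].
  rewrite /S; apply: rpred_sum => i _; rewrite /F; apply: polyOverZ.
    by move/polyOverP: CZ; apply.
  rewrite rpredM ?rpredX ?rpredD ?polyOverXn ?polyOverC //. - exact: natr_int.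
  - exact: polyOverX.
Qed.

Lemma key_id (F : fieldType) (za zb ba bb Q : F) : za != 0 -> zb != 0 ->
  za ^+ 2 - ba * za + Q = 0 -> zb ^+ 2 - bb * zb + Q = 0 ->
  (ba - (za / zb)^-1 * bb) * (ba - (za / zb) * bb) = - ((za / zb) - (za / zb)^-1) ^+ 2 * Q.
Proof.
move=> a0 b0 Ha Hb.
have -> : ba = (za ^+ 2 + Q) / za.
  apply: (mulIf a0); rewrite divfK //; apply/eqP; rewrite -subr_eq0; apply/eqP.
  have -> : ba * za - (za ^+ 2 + Q) = - (za ^+ 2 - ba * za + Q) by ring.
  by rewrite Ha oppr0.
have -> : bb = (zb ^+ 2 + Q) / zb.
  apply: (mulIf b0); rewrite divfK //; apply/eqP; rewrite -subr_eq0; apply/eqP.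
  have -> : bb * zb - (zb ^+ 2 + Q) = - (zb ^+ 2 - bb * zb + Q) by ring.
  by rewrite Hb oppr0.
field; by rewrite a0 b0.
Qed.

Lemma vbeta_bound (v : {rmorphism algC -> algC}) (z : algC) (N c : nat) :
  (0 < N)%N -> z ^+ N = 1 -> `|v (z ^+ c + z ^- c)| <= 2.
Proof.
move=> N0 zN; rewrite rmorphD fmorphV rmorphXn; apply: beta_bound.
rewrite normrX (@unit_norm (v z) N) ?expr1n //.
by rewrite -rmorphXn zN rmorph1.
Qed.

Lemma nt_core (z : algC) (N c c' : nat) (za zb : algC) (Q m : nat) :
  N.-primitive_root z -> (0 < c)%N -> (0 < c')%N -> c != c' ->
  (2 * c < totient N)%N -> (2 * c' < totient N)%N -> (16 < Q)%N ->
  za ^+ 2 - (z ^+ c + z ^- c) * za + Q%:R = 0 ->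
  zb ^+ 2 - (z ^+ c' + z ^- c') * zb + Q%:R = 0 -> (0 < m)%N -> za ^+ m != zb ^+ m.
Proof.
move=> prz c0 c'0 cc' hc hc' Q16 Ha Hb m0; apply/negP => /eqP E.
have Q0 : (Q%:R : algC) != 0 by rewrite pnatr_eq0; lia.
have nz (x b : algC) : x ^+ 2 - b * x + Q%:R = 0 -> x != 0.
  by move=> H; apply/negP => /eqP x0; move: H; rewrite x0 expr0n mulr0 subr0 add0r => /eqP; rewrite (negbTE Q0).
have a0 := nz _ _ Ha; have b0 := nz _ _ Hb.
have I := key_id a0 b0 Ha Hb.
set rho := za / zb in I.
have rm : rho ^+ m = 1 by rewrite /rho expr_div_n E divff // expf_neq0.
have r0 : rho != 0 by rewrite /rho mulf_neq0 ?invr_eq0.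
have N0 := prim_order_gt0 prz.
have zN := prim_expr_order prz.
case: (eqVneq (rho ^+ 2) 1) => r2.
  have ri : rho^-1 = rho.
    by apply: (mulfI r0); rewrite mulfV // -expr2 r2.
  rewrite ri subrr expr0n /= oppr0 mul0r -expr2 in I.
  move/eqP: I; rewrite expf_eq0 /= subr_eq0 => /eqP I.
  have : exists sg : bool, rho = (-1) ^+ sg.
    move: r2 => /eqP; rewrite sqrf_eq1 => /orP[] /eqP ->; [by exists false | by exists true].
  case=> sg rs; rewrite rs in I.
  case: (ltngtP c c') => hcc; last by rewrite hcc eqxx in cc'.
    have := beta_distinct sg prz c0 hcc hc'; rewrite I mulrA -exprD addnn -signr_odd odd_double expr0 mul1r eqxx //.
  by have := beta_distinct sg prz c'0 hcc hc; rewrite I eqxx.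
have [v Hv] := far_root m0 rm r2.
have vr1 : `|v rho| = 1.
  by apply: (@unit_norm _ m) => //; rewrite -rmorphXn rm rmorph1.
have vr0 : v rho != 0 by rewrite -normr_eq0 vr1 oner_eq0.
have := congr1 (fun x => `|v x|) I; rewrite /= rmorphM normrM [v (_ * Q%:R)]rmorphM normrM rmorph_nat normr_nat rmorphN normrN rmorphXn normrX.

have h1 : `|v (z ^+ c + z ^- c - rho^-1 * (z ^+ c' + z ^- c'))| <= 4.
  rewrite rmorphB rmorphM fmorphV; apply: le_trans (ler_normB _ _) _.
  rewrite normrM normfV vr1 invr1 mul1r.
  have -> : (4 : algC) = 2 + 2 by rewrite -natrD.
  by apply: lerD; apply: vbeta_bound N0 zN.
have h2 : `|v (z ^+ c + z ^- c - rho * (z ^+ c' + z ^- c'))| <= 4.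
  rewrite rmorphB rmorphM; apply: le_trans (ler_normB _ _) _.
  rewrite normrM vr1 mul1r.
  have -> : (4 : algC) = 2 + 2 by rewrite -natrD.
  by apply: lerD; apply: vbeta_bound N0 zN.
have h3 : 1 <= `|v (rho - rho^-1)|.
  have -> : v (rho - rho^-1) = (v rho ^+ 2 - 1) / v rho.
    by rewrite rmorphB fmorphV; field; rewrite vr0.
  by rewrite normrM normfV vr1 invr1 mulr1.
move=> E2.
have : (Q%:R : algC) <= 16.
  apply: le_trans (_ : `|v (rho - rho^-1)| ^+ 2 * Q%:R <= _).
    rewrite -[X in X <= _]mul1r ler_wpM2r ?ler0n //.
    by rewrite -(expr1n _ 2) lerXn2r ?nnegrE ?ler01 ?(le_trans ler01 h3).
  rewrite -E2.
  have -> : (16 : algC) = 4 * 4 by rewrite -natrM.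
  by apply: ler_pM; rewrite ?normr_ge0.
by rewrite ler_nat; lia.
Qed.

Lemma quad_root_gen (F : fieldType) (b s Q : F) : (2 : F) != 0 ->
  s ^+ 2 = b ^+ 2 - 4 * Q -> ((b + s) / 2) ^+ 2 - b * ((b + s) / 2) + Q = 0.
Proof.
move=> h2 hs.
have -> : ((b + s) / 2) ^+ 2 - b * ((b + s) / 2) + Q = (s ^+ 2 - (b ^+ 2 - 4 * Q)) / 4.
  have h4 : (4 : F) != 0 by rewrite (_ : (4 : F) = 2 * 2) ?mulf_neq0 // -natrM.
  by field; rewrite h4 h2.
by rewrite hs subrr mul0r.
Qed.

Lemma construct (q B : nat) : (1 < q)%N -> exists w : algC, in_weil_group q w /\
  exists u : 'I_B.+1 -> {rmorphism algC -> algC},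
    forall a b : 'I_B.+1, a != b -> forall m, (0 < m)%N -> u a w ^+ m != u b w ^+ m.
Proof.
move=> q1.
pose r := (B + 4)%N; pose N := (2 ^ r)%N.
have N0 : (0 < N)%N by rewrite expn_gt0.
have [z prz] := C_prim_root_exists N0.
have zN : z ^+ N = 1 := prim_expr_order prz.
pose beta := z + z^-1.
pose Q := (q ^ 5)%N.
have Q16 : (16 < Q)%N by rewrite /Q !expnS expn0; nia.
have Q1 : (1 < Q)%N by lia.
have [w Hw] : exists w, w ^+ 2 - beta * w + Q%:R = 0.
  exists ((beta + sqrtC (beta ^+ 2 - 4 * Q%:R)) / 2).
  by apply: quad_root_gen; rewrite ?sqrtCK // pnatr_eq0.
have [y Hy] : exists y, y ^+ 5 = w by exists (5.-root w); apply: rootCK.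
have Ab : beta \in Aint.
  rewrite rpredD ?(Aint_prim_root prz) //; apply: (Aint_unity_root N0).
  by apply/unity_rootP; rewrite exprVn zN invr1.
have Ay : y \in Aint by apply: (@Aint_root2 beta y 5 Q Ab) => //; rewrite Hy.
have Wy : weil_number q y.
  split => // u.
  have uz : `|u z| = 1 by apply: (unit_norm N0); rewrite -rmorphXn zN rmorph1.
  have Hu : (u w) ^+ 2 - (u z + (u z)^-1) * u w + Q%:R = 0.
    have := congr1 u Hw.
    by rewrite rmorphD rmorphB rmorphXn rmorphM rmorphD fmorphV rmorph_nat rmorph0.
  have Nw := weil_quad Q1 uz Hu.
  have : (`|u y| ^+ 2) ^+ 5 = (q%:R) ^+ 5.
    by rewrite -exprM mulnC exprM -normrX -rmorphXn Hy Nw /Q natrX.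
  move/(pexpIrn (isT : (0 < 5)%N)) => h.
  rewrite -h ?sqrCK ?nnegrE ?normr_ge0 ?exprn_ge0 ?ler0n //.
pose c (a : 'I_B.+1) := (2 * a + 1)%N.
have cop a : coprime (c a) N.
  by rewrite /N coprimeXr // coprimen2 /c addn1 mul2n /= odd_double.
pose u a := sval (Qn_aut_exists (cop a)).
have Hu a : forall x, x ^+ N = 1 -> u a x = x ^+ c a := svalP (Qn_aut_exists (cop a)).
have tot : totient N = (2 ^ (B + 3))%N.
  rewrite /N totient_pfactor // /r addnS /=; lia.
have bigB : (B < 2 ^ B)%N by apply: ltn_expl.
exists w; split.
  exists 1%N, (fun=> y), (fun=> 5%:Z); split => //.
  by rewrite big_ord1.
exists u => a b ab m m0.
have Eq (a' : 'I_B.+1) : (u a' w) ^+ 2 - (z ^+ c a' + z ^- c a') * u a' w + Q%:R = 0.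
  have := congr1 (u a') Hw.
  by rewrite rmorphD rmorphB rmorphXn rmorphM /beta rmorphD fmorphV rmorph_nat rmorph0 (Hu a' z zN).
apply: (nt_core prz _ _ _ _ _ Q16 (Eq a) (Eq b) m0).
- by rewrite /c addn1.
- by rewrite /c addn1.
- apply: contra ab => /eqP h; apply/eqP; apply: val_inj => /=; rewrite /c in h; lia.
- rewrite tot /c; have := ltn_ord a; rewrite expnD.  lia.
- rewrite tot /c; have := ltn_ord b; rewrite expnD.  lia.
Qed.

Lemma conj_fin (x : algC) : {r : seq algC | forall u : {rmorphism algC -> algC}, u x \in r}.
Proof.
have [r Dr] := closed_field_poly_normal (minCpoly x).
exists r => u.
have : root (minCpoly x) (u x) by rewrite -(minCpoly_aut u x) root_minCpoly.
by rewrite Dr (monicP (minCpoly_monic x)) scale1r root_prod_XsubC.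
Qed.

Lemma main_ind (q : nat) : (1 < q)%N -> forall n, exists x : 'I_n -> algC,
  (forall i, in_weil_group q (x i)) /\
  forall k : 'I_n -> int, \prod_(i < n) (x i) ^ (k i) = 1 -> forall i, k i = 0.
Proof.
move=> q1; elim=> [|n IH].
  by exists (fun _ => 0); split => [[]|k _ []].
have [x [Gx Ix]] := IH.
pose R i := sval (conj_fin (x i)).
have HR i (u : {rmorphism algC -> algC}) : u (x i) \in R i := svalP (conj_fin (x i)) u.
pose K := (\max_(i < n) size (R i))%N.
pose B := #|{ffun 'I_n -> 'I_K.+1}|.
have [w [Gw [u Hu]]] := construct B q1.
pose f (a : 'I_B.+1) : {ffun 'I_n -> 'I_K.+1} :=
  [ffun i => inord (index (u a (x i)) (R i))].
have : ~~ injectiveb f.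
  by apply/negP => /injectiveP inj; have := leq_card f inj; rewrite card_ord ltnn.
case/injectivePn => a [b ab fab].
have same i : u a (x i) = u b (x i).
  have idx c : (index (u c (x i)) (R i) < K.+1)%N.
    rewrite ltnS; apply: (leq_trans (ltnW _) (@leq_bigmax _ (fun j : 'I_n => size (R j)) i)).
    by rewrite index_mem HR.
  have := congr1 (fun g : {ffun 'I_n -> 'I_K.+1} => val (g i)) fab; rewrite /= !ffunE !inordK // => E.
  by rewrite -(nth_index 0 (HR i (u a))) E nth_index.
pose x' : 'I_n.+1 -> algC := fun i => if unlift ord_max i is Some j then x j else w.
have xw (i : 'I_n) : widen_ord (leqnSn n) i = lift ord_max i by apply: val_inj; rewrite [RHS]lift_max.
have x'w (i : 'I_n) : x' (widen_ord (leqnSn n) i) = x i by rewrite /x' xw liftK.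
have x'm : x' ord_max = w by rewrite /x' unlift_none.
exists x'; split.
  by move=> i; rewrite /x'; case: (unlift _ _).
move=> k Hk.
rewrite big_ord_recr /= x'm in Hk.
rewrite (eq_bigr (fun i => x i ^ k (widen_ord (leqnSn n) i))) in Hk; last by move=> i _; rewrite x'w.
set P := \prod_(i < n) x i ^ k (widen_ord (leqnSn n) i) in Hk.
have Pu c : u c P = \prod_(i < n) (u c (x i)) ^ k (widen_ord (leqnSn n) i).
  by rewrite rmorph_prod; apply: eq_bigr => i _; rewrite fmorphXz.
have uab : u a P = u b P by rewrite !Pu; apply: eq_bigr => i _; rewrite same.
have k0 : k ord_max = 0.
  apply/eqP; apply/negP => k0n.
  have Ha := congr1 (u a) Hk; have Hb := congr1 (u b) Hk.
  rewrite rmorphM rmorph1 fmorphXz in Ha; rewrite rmorphM rmorph1 fmorphXz in Hb.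
  have P0 : u a P != 0 by apply/negP => /eqP P0; rewrite P0 mul0r in Ha; move/eqP: Ha; rewrite eq_sym oner_eq0.
  have E : u a w ^ k ord_max = u b w ^ k ord_max by apply: (mulfI P0); rewrite Ha uab Hb.
  move: k0n E; case: (k ord_max) => m.
    case: m => // m _ E.
    by have := Hu a b ab m.+1 isT; rewrite -!exprnP in E; rewrite E eqxx.
  move=> _ E; have := Hu a b ab m.+1 isT.
  rewrite NegzE -!exprnN in E; move/invr_inj: E => ->.
  by rewrite eqxx.
rewrite k0 expr0z mulr1 in Hk.
have := Ix _ Hk => Hi j.
case: (unliftP ord_max j) => [i ->|->] //.
by rewrite -xw Hi.
Qed.

Theorem corollary3p9 (q : nat) :
  prime_power q -> infinite_rank (in_weil_group q).
Proof.
move=> [p [e [pp [e0 ->]]]].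
have q1 : (1 < p ^ e)%N.
  have p1 := prime_gt1 pp; case: e e0 => // e _.
  rewrite expnS; have := expn_gt0 p e; rewrite (ltn_trans _ p1) ?ltnn //; nia.
move=> n; have [x [Gx Ix]] := main_ind q1 n.
by exists x; split.
Qed.
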